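(* Let $G$ be a countable group, let $X$ be an incontractible $G$-flow and let $Y$ be a minimal, proximal $G$-flow. Then $X$ and $Y$ are disjoint.
   Context: A $G$-flow is a compact Hausdorff space with an action of $G$ by homeomorphisms. A point $x$ of a $G$-flow is minimal if $\overline{G\cdot x}$ is a minimal flow (every orbit in it dense). A $G$-flow $X$ is incontractible if for every $n\in\mathbb{N}$ the minimal points of $X^n$ (diagonal action) are dense in $X^n$. A $G$-flow $Y$ is proximal if for all $y_1,y_2\in Y$ there exist $z\in Y$ and a net $(g_i)$ in $G$ with $g_iy_1\to z$ and $g_iy_2\to z$. Two $G$-flows $X,Y$ are disjoint if the only closed $G$-invariant subset of $X\times Y$ projecting onto both factors is $X\times Y$. *)

(* Defs.v *)
From Stdlib Require Import List.
Import ListNotations.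
Set Implicit Arguments.

Definition opens (T : Type) := (T -> Prop) -> Prop.

Definition is_topology {T : Type} (op : opens T) : Prop :=
  op (fun _ => True) /\
  (forall U V, op U -> op V -> op (fun x => U x /\ V x)) /\
  (forall F : (T -> Prop) -> Prop,
      (forall U, F U -> op U) -> op (fun x => exists U, F U /\ U x)).

Definition closed {T : Type} (op : opens T) (A : T -> Prop) : Prop :=
  op (fun x => ~ A x).

Definition closure {T : Type} (op : opens T) (A : T -> Prop) (x : T) : Prop :=
  forall U, op U -> U x -> exists y, U y /\ A y.

Definition dense {T : Type} (op : opens T) (A : T -> Prop) : Prop :=
  forall x, closure op A x.

Definition compact {T : Type} (op : opens T) : Prop :=
  forall F : (T -> Prop) -> Prop,
    (forall U, F U -> op U) -> (forall x, exists U, F U /\ U x) ->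
    exists l : list (T -> Prop),
      (forall U, In U l -> F U) /\ (forall x, exists U, In U l /\ U x).

Definition hausdorff {T : Type} (op : opens T) : Prop :=
  forall x y, x <> y -> exists U V, op U /\ op V /\ U x /\ V y /\
                                   (forall z, ~ (U z /\ V z)).

Definition continuous {A B : Type} (opA : opens A) (opB : opens B) (f : A -> B) : Prop :=
  forall V, opB V -> opA (fun x => V (f x)).

Definition prod_opens {I T : Type} (op : opens T) : opens (I -> T) :=
  fun U => forall f, U f ->
    exists (l : list I) (V : I -> T -> Prop),
      (forall i, In i l -> op (V i) /\ V i (f i)) /\
      (forall g, (forall i, In i l -> V i (g i)) -> U g).

Definition prod2_opens {X Y : Type} (opX : opens X) (opY : opens Y) : opens (X * Y) :=
  fun U => forall p, U p ->
    exists A B, opX A /\ opY B /\ A (fst p) /\ B (snd p) /\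
                (forall q, A (fst q) -> B (snd q) -> U q).

Definition directed {D : Type} (le : D -> D -> Prop) : Prop :=
  inhabited D /\ (forall a, le a a) /\ (forall a b c, le a b -> le b c -> le a c) /\
  (forall a b, exists c, le a c /\ le b c).

Definition converges {T D : Type} (op : opens T) (le : D -> D -> Prop)
  (net : D -> T) (x : T) : Prop :=
  forall U, op U -> U x -> exists d0, forall d, le d0 d -> U (net d).

Structure group := Group {
  gcarrier :> Type;
  gmul : gcarrier -> gcarrier -> gcarrier;
  gone : gcarrier;
  ginv : gcarrier -> gcarrier;
  gmulA : forall a b c, gmul a (gmul b c) = gmul (gmul a b) c;
  gmul1 : forall a, gmul gone a = a;
  gmulV : forall a, gmul (ginv a) a = gone
}.

Arguments gmul {_} _ _.
Arguments ginv {_} _.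

Definition countable_group (G : group) : Prop :=
  exists e : nat -> G, forall g : G, exists n, e n = g.

(* A G-flow: compact Hausdorff space with an action of G by homeomorphisms
   (each act g is continuous, with continuous inverse act (ginv g)). *)
Definition is_flow (G : group) {T : Type} (op : opens T) (act : G -> T -> T) : Prop :=
  is_topology op /\ compact op /\ hausdorff op /\
  (forall x, act (gone G) x = x) /\
  (forall (g h : G) x, act (gmul g h) x = act g (act h x)) /\
  (forall g : G, continuous op op (act g)).

Definition orbit {G : group} {T : Type} (act : G -> T -> T) (x : T) : T -> Prop :=
  fun y => exists g, y = act g x.

Definition minimal_flow {G : group} {T : Type} (op : opens T) (act : G -> T -> T) : Prop :=
  forall y, dense op (orbit act y).

(* x is a minimal point: the orbit closure of x is a minimal flow, i.e. every
   orbit in it is dense in it. *)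
Definition minimal_point {G : group} {T : Type} (op : opens T) (act : G -> T -> T)
  (x : T) : Prop :=
  forall y, closure op (orbit act x) y ->
  forall z, closure op (orbit act x) z -> closure op (orbit act y) z.

Definition fin (n : nat) := {k : nat | k < n}.

Definition pow_act {G : group} {T : Type} (n : nat) (act : G -> T -> T)
  : G -> (fin n -> T) -> (fin n -> T) :=
  fun g f k => act g (f k).

Definition incontractible {G : group} {T : Type} (op : opens T) (act : G -> T -> T) : Prop :=
  forall n : nat,
    dense (@prod_opens (fin n) T op) (minimal_point (@prod_opens (fin n) T op) (@pow_act G T n act)).

Definition proximal {G : group} {T : Type} (op : opens T) (act : G -> T -> T) : Prop :=
  forall y1 y2 : T, exists (z : T) (D : Type) (le : D -> D -> Prop) (net : D -> G),
    directed le /\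
    converges op le (fun d => act (net d) y1) z /\
    converges op le (fun d => act (net d) y2) z.

Definition disjoint_flows {G : group} {X Y : Type}
  (opX : opens X) (actX : G -> X -> X) (opY : opens Y) (actY : G -> Y -> Y) : Prop :=
  forall W : X * Y -> Prop,
    closed (prod2_opens opX opY) W ->
    (forall (g : G) p, W p -> W (actX g (fst p), actY g (snd p))) ->
    (forall x, exists y, W (x, y)) ->
    (forall y, exists x, W (x, y)) ->
    forall p, W p.

(* Main.v *)
Require Import Defs.
From Stdlib Require Import Arith List Classical ClassicalEpsilon FunctionalExtensionality PropExtensionality Lia.
Import ListNotations.

Definition cluster {A S} (N : (A->Prop)->Prop) (F : (S->Prop)->Prop) (phi : S -> A) :=
  forall U, N U -> forall P, F P -> exists s, P s /\ U (phi s).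

Definition good_base {A} (N : (A->Prop)->Prop) :=
  N (fun _ => True) /\ forall U V, N U -> N V -> N (fun x => U x /\ V x).

Definition Nx {A B} (N : (A->Prop)->Prop) (opB : opens B) (b : B) : ((A*B)->Prop)->Prop :=
  fun W => exists U V, N U /\ opB V /\ V b /\ forall a c, U a -> V c -> W (a, c).

Fixpoint bigI {B A} (l : list B) (f : B -> A -> Prop) (x : A) : Prop :=
  match l with nil => True | b :: l' => f b x /\ bigI l' f x end.

Lemma bigI_In {B A} (l : list B) (f : B -> A -> Prop) x :
  bigI l f x <-> forall b, In b l -> f b x.
Proof.
  induction l as [|b l IH]; simpl.
  - split; auto. intros _ b [].
  - split.
    + intros [H1 H2] b' [<-|Hb]; auto. apply IH; auto.
    + intros H; split; auto. apply IH; auto.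
Qed.

Lemma bigI_N {B A} (N : (A->Prop)->Prop) (l : list B) f :
  good_base N -> (forall b, In b l -> N (f b)) -> N (bigI l f).
Proof.
  intros [HT HI] H; induction l as [|b l IH]; simpl; auto.
  apply HI; auto. apply H; simpl; auto. apply IH; intros; apply H; simpl; auto.
Qed.

Lemma choice' {A B} (R : A -> B -> Prop) : (forall a, exists b, R a b) -> exists f, forall a, R a (f a).
Proof.
  intros H. exists (fun a => proj1_sig (constructive_indefinite_description _ (H a))).
  intro a. exact (proj2_sig (constructive_indefinite_description _ (H a))).
Qed.

Lemma list_pull {A B} (f : A -> B) (l : list B) :
  (forall V, In V l -> exists b, V = f b) -> exists lb, forall V, In V l -> exists b, In b lb /\ V = f b.
Proof.
  induction l as [|V l IH]; intros H.
  - exists nil; intros V [].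
  - destruct IH as [lb Hlb]. intros; apply H; simpl; auto.
    destruct (H V) as [b Hb]; simpl; auto.
    exists (b :: lb). intros V' [<-|HV'].
    + exists b; simpl; auto.
    + destruct (Hlb V' HV') as [b' [H1 H2]]. exists b'; simpl; auto.
Qed.

Lemma ext {A B S} (N : (A->Prop)->Prop) (F : (S->Prop)->Prop) (opB : opens B)
  (phi : S -> A) (psi : S -> B) :
  compact opB -> good_base N -> good_base F ->
  cluster N F phi -> exists b, cluster (Nx N opB b) F (fun s => (phi s, psi s)).
Proof.
  intros Hc HN HF Hcl.
  apply NNPP; intro Hno.
  assert (H : forall b, exists t : (A->Prop)*(B->Prop)*(S->Prop),
     N (fst (fst t)) /\ opB (snd (fst t)) /\ snd (fst t) b /\ F (snd t) /\
     forall s, snd t s -> fst (fst t) (phi s) -> snd (fst t) (psi s) -> False).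
  { intro b. apply NNPP; intro Hb. apply Hno. exists b.
    intros W [U [V [HU [HV [Vb HW]]]]] P HP.
    apply NNPP; intro Hs. apply Hb. exists (U, V, P); simpl.
    repeat split; auto. intros s Ps Us Vs. apply Hs. exists s; split; auto. }
  destruct (choice' _ H) as [t Ht].
  destruct (Hc (fun V => exists b, V = snd (fst (t b)))) as [lst [Hl1 Hl2]].
  - intros V [b ->]. apply Ht.
  - intro y. exists (snd (fst (t y))). split; [exists y; auto | apply Ht].
  - destruct (list_pull (fun b => snd (fst (t b))) lst Hl1) as [lb Hlb].
    destruct (Hcl (bigI lb (fun b => fst (fst (t b))))
                  (bigI_N N lb _ HN (fun b _ => proj1 (Ht b)))
                  (bigI lb (fun b => snd (t b)))
                  (bigI_N F lb _ HF (fun b _ => proj1 (proj2 (proj2 (proj2 (Ht b))))))) as [s [Ps Us]].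
    destruct (Hl2 (psi s)) as [V [HVl HVs]].
    destruct (Hlb V HVl) as [b [Hb ->]].
    apply (proj2 (proj2 (proj2 (proj2 (Ht b)))) s).
    + apply (proj1 (bigI_In _ _ _) Ps); auto.
    + apply (proj1 (bigI_In _ _ _) Us); auto.
    + auto.
Qed.

Lemma good_base_Nx {A B} (N : (A->Prop)->Prop) (opB : opens B) b :
  good_base N -> is_topology opB -> good_base (Nx N opB b).
Proof.
  intros [HT HI] [BT [BI _]]. split.
  - exists (fun _ => True), (fun _ => True). repeat split; auto.
  - intros W1 W2 [U1 [V1 [HU1 [HV1 [Vb1 H1]]]]] [U2 [V2 [HU2 [HV2 [Vb2 H2]]]]].
    exists (fun x => U1 x /\ U2 x), (fun x => V1 x /\ V2 x).
    split; [auto|split; [auto|split; [auto|]]].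
    intros a0 c0 [] []; split; auto.
Qed.

Lemma op_cond {T} (op : opens T) (Q : Prop) (A : T -> Prop) :
  op (fun _ => True) -> (Q -> op A) -> op (fun x => Q -> A x).
Proof.
  intros HT HA. destruct (classic Q) as [q|nq].
  - replace (fun x => Q -> A x) with A by
     (apply functional_extensionality; intro x; apply propositional_extensionality; tauto).
    auto.
  - replace (fun x => Q -> A x) with (fun _ : T => True) by
     (apply functional_extensionality; intro x; apply propositional_extensionality; tauto).
    auto.
Qed.

Definition Nc {I Z} (opZ : opens Z) (l : list I) (r : I -> Z) : ((I -> Z) -> Prop) -> Prop :=
  fun U => exists V : I -> Z -> Prop, (forall j, In j l -> opZ (V j) /\ V j (r j)) /\
           (forall f, (forall j, In j l -> V j (f j)) -> U f).

Lemma good_base_Nc {I Z} (opZ : opens Z) l (r : I -> Z) :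
  opZ (fun _ => True) -> (forall U V, opZ U -> opZ V -> opZ (fun x => U x /\ V x)) ->
  good_base (Nc opZ l r).
Proof.
  intros HT HI. split.
  - exists (fun _ _ => True). split; auto.
  - intros U1 U2 [V1 [H1 K1]] [V2 [H2 K2]].
    exists (fun j z => V1 j z /\ V2 j z). split.
    + intros j Hj. destruct (H1 j Hj), (H2 j Hj). split; auto.
    + intros f Hf. split; [apply K1|apply K2]; intros j Hj; apply Hf; auto.
Qed.

Lemma prod2_T {X Y} (opX : opens X) (opY : opens Y) :
  is_topology opX -> is_topology opY -> prod2_opens opX opY (fun _ => True).
Proof.
  intros [HX _] [HY _] p _. exists (fun _ => True), (fun _ => True). repeat split; auto.
Qed.

Lemma prod2_I {X Y} (opX : opens X) (opY : opens Y) :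
  is_topology opX -> is_topology opY ->
  forall U V, prod2_opens opX opY U -> prod2_opens opX opY V ->
  prod2_opens opX opY (fun x => U x /\ V x).
Proof.
  intros [_ [HX _]] [_ [HY _]] U V HU HV p [Up Vp].
  destruct (HU p Up) as [A1 [B1 [? [? [? [? K1]]]]]].
  destruct (HV p Vp) as [A2 [B2 [? [? [? [? K2]]]]]].
  exists (fun x => A1 x /\ A2 x), (fun y => B1 y /\ B2 y).
  split; [auto|split; [auto|split; [auto|split; [auto|]]]].
  intros q [] []; split; auto.
Qed.

Lemma prod2_fst {X Y} (opX : opens X) (opY : opens Y) A :
  is_topology opY -> opX A -> prod2_opens opX opY (fun q => A (fst q)).
Proof.
  intros [HY _] HA p Ap. exists A, (fun _ => True). repeat split; auto.
Qed.

Lemma prod2_snd {X Y} (opX : opens X) (opY : opens Y) B :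
  is_topology opX -> opY B -> prod2_opens opX opY (fun q => B (snd q)).
Proof.
  intros [HX _] HB p Bp. exists (fun _ => True), B. repeat split; auto.
Qed.

Definition actZ {G : group} {X Y} (actX : G -> X -> X) (actY : G -> Y -> Y) (g : G) (p : X * Y) :=
  (actX g (fst p), actY g (snd p)).

Lemma actZ_cont {G : group} {X Y} opX opY (actX : G -> X -> X) (actY : G -> Y -> Y) g :
  continuous opX opX (actX g) -> continuous opY opY (actY g) ->
  continuous (prod2_opens opX opY) (prod2_opens opX opY) (actZ actX actY g).
Proof.
  intros CX CY O HO p Op.
  destruct (HO _ Op) as [A [B [HA [HB [Ap [Bp K]]]]]].
  exists (fun x => A (actX g x)), (fun y => B (actY g y)).
  split; [apply CX; auto|split; [apply CY; auto|split; [auto|split; [auto|]]]].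
  intros q Aq Bq. apply K; auto.
Qed.

Definition Ftriv (S : Type) : (S -> Prop) -> Prop := fun P => forall s, P s.

Lemma good_base_Ftriv S : good_base (Ftriv S).
Proof. split; [intros s; exact I | intros P Q HP HQ s; split; auto]. Qed.

Definition Ftail {D} (le : D -> D -> Prop) : (D -> Prop) -> Prop :=
  fun P => exists d0, forall d, le d0 d -> P d.

Lemma good_base_Ftail {D} (le : D -> D -> Prop) : directed le -> good_base (Ftail le).
Proof.
  intros [[d] [Hr [Ht Hu]]]. split.
  - exists d; auto.
  - intros P Q [a Ha] [b Hb]. destruct (Hu a b) as [c [Hac Hbc]].
    exists c. intros e He; split; [apply Ha|apply Hb]; eauto.
Qed.

Definition upd {I Z} (r : I -> Z) (i : I) (c : Z) : I -> Z :=
  fun j => if excluded_middle_informative (j = i) then c else r j.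

Lemma cluster_Nc_mono {I Z S} (opZ : opens Z) (l1 l2 : list I) r F (phi : S -> I -> Z) :
  opZ (fun _ => True) ->
  (forall j, In j l2 -> In j l1) -> cluster (Nc opZ l1 r) F phi -> cluster (Nc opZ l2 r) F phi.
Proof.
  intros HT Hsub Hc U [V [HV HU]] P HP.
  destruct (Hc (fun f => forall j, In j l2 -> V j (f j))) with (P := P) as [s [Ps Us]]; auto.
  - exists (fun j z => In j l2 -> V j z). split.
    + intros j Hj. split.
      * apply op_cond; auto. intro H; apply HV; auto.
      * intro H; apply HV; auto.
    + intros f Hf j Hj. apply Hf; auto.
  - exists s; split; auto.
Qed.

Lemma tych_step {I S X Y} (opX : opens X) (opY : opens Y) (F : (S -> Prop) -> Prop)
  (phi : S -> I -> X * Y) l r i :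
  is_topology opX -> is_topology opY -> compact opX -> compact opY -> good_base F ->
  cluster (Nc (prod2_opens opX opY) l r) F phi ->
  exists r', (forall j, In j l -> r' j = r j) /\ cluster (Nc (prod2_opens opX opY) (i::l) r') F phi.
Proof.
  intros TX TY CX CY HF Hc.
  assert (TZ := prod2_T opX opY TX TY).
  destruct (classic (In i l)) as [Hi|Hi].
  - exists r; split; auto. apply cluster_Nc_mono with l; auto.
    intros j [<-|Hj]; auto.
  - assert (GN := good_base_Nc (prod2_opens opX opY) l r TZ (prod2_I opX opY TX TY)).
    destruct (ext _ F opX phi (fun s => fst (phi s i)) CX GN HF Hc) as [b1 H1].
    destruct (ext _ F opY _ (fun s => snd (phi s i)) CY (good_base_Nx _ opX b1 GN TX) HF H1)
      as [b2 H2].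
    exists (upd r i (b1, b2)). split.
    + intros j Hj. unfold upd. destruct (excluded_middle_informative (j = i)); auto.
      subst; contradiction.
    + intros U [V [HV HU]] P HP.
      destruct (HV i (or_introl eq_refl)) as [Vo Vr].
      unfold upd in Vr. destruct (excluded_middle_informative (i = i)) as [_|n]; [|contradiction].
      destruct (Vo _ Vr) as [A [B [HA [HB [Ab [Bb K]]]]]].
      simpl in Ab, Bb.
      destruct (H2 (fun pp => (forall j, In j l -> V j (fst (fst pp) j)) /\ A (snd (fst pp)) /\ B (snd pp)))
        with (P := P) as [s [Ps [U0 [As Bs]]]]; auto.
      * exists (fun p => (forall j, In j l -> V j (fst p j)) /\ A (snd p)), B.
        split; [|split; [auto|split; [auto|]]].
        -- exists (fun f => forall j, In j l -> V j (f j)), A.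
           split; [|split; [auto|split; [auto|]]].
           ++ exists V. split; auto.
              intros j Hj. destruct (HV j (or_intror Hj)) as [o v]. split; auto.
              unfold upd in v. destruct (excluded_middle_informative (j = i)); auto.
              subst; contradiction.
           ++ intros a c Ha Hc'; split; auto.
        -- intros a c [Ha1 Ha2] Hc'; simpl; auto.
      * exists s; split; auto. apply HU. intros j [<-|Hj]; simpl in *; auto.
        all: try (apply K; auto).
Qed.

Lemma tych_full {I S X Y} (opX : opens X) (opY : opens Y) (F : (S -> Prop) -> Prop)
  (phi : S -> I -> X * Y) :
  is_topology opX -> is_topology opY -> compact opX -> compact opY -> good_base F ->
  (forall P, F P -> exists s, P s) ->
  forall l, exists r, cluster (Nc (prod2_opens opX opY) l r) F phi.
Proof.
  intros TX TY CX CY HF Hne l. induction l as [|i l IH].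
  - destruct (Hne _ (proj1 HF)) as [s0 _]. exists (phi s0).
    intros U [V [_ HU]] P HP. destruct (Hne P HP) as [s Ps]. exists s; split; auto.
    apply HU. intros j [].
  - destruct IH as [r Hr].
    destruct (tych_step opX opY F phi l r i TX TY CX CY HF Hr) as [r' [_ H]]. eauto.
Qed.

Lemma trans_cl {G : group} {X Y I} (opX : opens X) (opY : opens Y)
  (actX : G -> X -> X) (actY : G -> Y -> Y) (l : list I) p r' s :
  (forall g h x, actX (gmul g h) x = actX g (actX h x)) ->
  (forall g h y, actY (gmul g h) y = actY g (actY h y)) ->
  (forall g, continuous opX opX (actX g)) -> (forall g, continuous opY opY (actY g)) ->
  cluster (Nc (prod2_opens opX opY) l r') (Ftriv G) (fun g j => actZ actX actY g (p j)) ->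
  cluster (Nc (prod2_opens opX opY) l s) (Ftriv G) (fun g j => actZ actX actY g (r' j)) ->
  cluster (Nc (prod2_opens opX opY) l s) (Ftriv G) (fun g j => actZ actX actY g (p j)).
Proof.
  intros MX MY CX CY H1 H2 U [V [HV HU]] P HP.
  destruct (H2 (fun f => forall j, In j l -> V j (f j))) with (P := fun _ : G => True)
    as [g [_ Hg]].
  { exists V; split; auto. } { intros s0; exact Logic.I. }
  destruct (H1 (fun f => forall j, In j l -> V j (actZ actX actY g (f j)))) with (P := fun _ : G => True)
    as [h [_ Hh]].
  { exists (fun j z => V j (actZ actX actY g z)). split; auto.
    intros j Hj. split; auto. apply actZ_cont; auto. apply HV; auto. }
  { intros s0; exact Logic.I. }
  exists (gmul g h). split; [apply HP|]. apply HU. intros j Hj.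
  specialize (Hh j Hj). unfold actZ in *; simpl in *. rewrite MX, MY. exact Hh.
Qed.

Lemma E_lemma {G : group} {X Y I} (opX : opens X) (opY : opens Y)
  (actX : G -> X -> X) (actY : G -> Y -> Y) (y0 : Y) :
  is_flow G opX actX -> is_flow G opY actY -> proximal opY actY ->
  forall (l : list I) p, exists r z,
    cluster (Nc (prod2_opens opX opY) l r) (Ftriv G) (fun g j => actZ actX actY g (p j)) /\
    forall j, In j l -> snd (r j) = z.
Proof.
  intros [TX [CX [HX [X1 [XM XC]]]]] [TY [CY [HY [Y1 [YM YC]]]]] Hprox l p.
  assert (TZ := prod2_T opX opY TX TY).
  induction l as [|i l IH].
  - exists p, y0. split; [|intros j []].
    intros U [V [_ HU]] P HP. exists (gone G). split; [apply HP|]. apply HU; intros j [].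
  - destruct IH as [r [z [Hr Hz]]].
    destruct (tych_step opX opY (Ftriv G) _ l r i TX TY CX CY (good_base_Ftriv G) Hr)
      as [r' [Hr'l Hr']].
    destruct (Hprox z (snd (r' i))) as [z2 [D [le [h [Hdir [Hc1 Hc2]]]]]].
    assert (HFD := good_base_Ftail le Hdir).
    destruct (tych_full opX opY (Ftail le) (fun d j => actZ actX actY (h d) (r' j))
                TX TY CX CY HFD) with (l := i :: l) as [s Hs].
    { intros P [d0 Hd0]. exists d0. apply Hd0. apply Hdir. }
    exists s, z2. split.
    + apply trans_cl with r'; auto.
      intros U HU P HP. destruct (Hs U HU (fun _ => True)) as [d [_ Ud]].
      { apply HFD. }
      exists (h d). split; auto.
    + assert (Key : forall j v, In j (i :: l) -> snd (r' j) = v ->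
                converges opY le (fun d => actY (h d) v) z2 -> snd (s j) = z2).
      { intros j v Hj Hv Hcv. apply NNPP; intro Hne.
        destruct (HY _ _ Hne) as [O1 [O2 [o1 [o2 [O1s [O2z Hdis]]]]]].
        destruct (Hcv O2 o2 O2z) as [d0 Hd0].
        destruct (Hs (fun f => O1 (snd (f j)))) with (P := fun d => le d0 d) as [d [Hd Ud]].
        - exists (fun j' q => j' = j -> O1 (snd q)). split.
          + intros j' Hj'. split.
            * apply op_cond; auto. intros; apply prod2_snd; auto.
            * intro Ej; rewrite Ej; auto.
          + intros f Hf. apply Hf; auto.
        - exists d0; auto.
        - apply (Hdis (actY (h d) v)). split; auto. unfold actZ in Ud; simpl in Ud.
          rewrite <- Hv; auto. }
      intros j Hj. destruct Hj as [<-|Hj].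
      * apply Key with (snd (r' i)); simpl; auto.
      * apply Key with z; simpl; auto. rewrite Hr'l; auto.
Qed.

Lemma gmulVr (G : group) (g : G) : gmul g (ginv g) = gone G.
Proof.
  assert (E1 : gmul (ginv g) (gmul g (ginv g)) = ginv g).
  { rewrite gmulA, gmulV, gmul1; auto. }
  rewrite <- (gmul1 G (gmul g (ginv g))).
  rewrite <- (gmulV G (ginv g)) at 1.
  rewrite <- gmulA, E1. apply gmulV.
Qed.

Lemma fin_enum k : exists l : list (fin k), forall i, In i l.
Proof.
  induction k as [|k [l Hl]].
  - exists nil. intros [m Hm]. lia.
  - exists (exist (fun m => m < S k) k (Nat.lt_succ_diag_r k) ::
            map (fun i : fin k => exist (fun m => m < S k) (proj1_sig i)
                   (Nat.lt_lt_succ_r _ _ (proj2_sig i))) l).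
    intros [m Hm]. destruct (Nat.eq_dec m k) as [->|Hne].
    + left. f_equal. apply proof_irrelevance.
    + right. apply in_map_iff. assert (Hm' : m < k) by lia.
      exists (exist _ m Hm'). split; [|apply Hl]. simpl. f_equal. apply proof_irrelevance.
Qed.

Theorem proposition4p4 (G : group) (X Y : Type)
  (opX : opens X) (actX : G -> X -> X) (opY : opens Y) (actY : G -> Y -> Y) :
  countable_group G ->
  is_flow G opX actX -> is_flow G opY actY ->
  incontractible opX actX ->
  minimal_flow opY actY -> proximal opY actY ->
  disjoint_flows opX actX opY actY.
Proof.
  intros _ FX FY Hinc Hmin Hprox.
  pose proof FX as FX'. pose proof FY as FY'.
  destruct FX as [TX [CX [HX [X1 [XM XC]]]]].
  destruct FY as [TY [CY [HY [Y1 [YM YC]]]]].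
  intros W Wcl Winv Hpx Hpy [x0 y0].
  apply NNPP; intro Hn.
  destruct (Wcl (x0,y0) Hn) as [U [V [HU [HV [Ux0 [Vy0 Hbox]]]]]].
  simpl in Ux0, Vy0.
  assert (Hcov : exists hs : list G, forall y, exists h, In h hs /\ V (actY h y)).
  { destruct (CY (fun O => exists h, O = (fun y => V (actY h y)))) as [lst [Hl1 Hl2]].
    - intros O [h ->]. apply YC; auto.
    - intro y. destruct (Hmin y y0 V HV Vy0) as [y' [Vy' [g ->]]].
      exists (fun y => V (actY g y)). split; eauto.
    - destruct (list_pull (fun h => fun y => V (actY h y)) lst Hl1) as [hs Hhs].
      exists hs. intro y. destruct (Hl2 y) as [O [HO Oy]].
      destruct (Hhs O HO) as [h [Hh ->]]. eauto. }
  destruct Hcov as [hs Hhs].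
  set (k := length hs).
  set (hf := fun i : fin k => nth (proj1_sig i) hs (gone G)).
  destruct (fin_enum k) as [l Hl].
  set (Bx := fun f : fin k -> X => forall i, U (actX (hf i) (f i))).
  destruct (Hinc k (fun i => actX (ginv (hf i)) x0) Bx) as [xb [Bxb Mxb]].
  { intros f Bf. exists l, (fun i x => U (actX (hf i) x)). split.
    - intros i _; split; [apply XC; auto | apply Bf].
    - intros g Hg i; apply Hg; auto. }
  { intro i. rewrite <- XM, gmulVr, X1. auto. }
  destruct (choice' (fun x y => W (x,y)) Hpx) as [yf Hyf].
  set (p := fun j => (xb j, yf (xb j))).
  destruct (E_lemma opX opY actX actY y0 FX' FY' Hprox l p) as [r [z [Hr Hz]]].
  assert (Wr : forall j, W (r j)).
  { intro j; apply NNPP; intro Hnj.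
    destruct (Hr (fun f => ~ W (f j))) with (P := fun _ : G => True) as [g [_ Hg]].
    - exists (fun j' q => j' = j -> ~ W q). split.
      + intros j' _; split.
        * apply op_cond; [apply prod2_T; auto| intros; exact Wcl].
        * intro Ej; rewrite Ej; auto.
      + intros f Hf; apply Hf; auto.
    - intros _; exact Logic.I.
    - apply Hg. apply (Winv g (p j)). unfold p; simpl; apply Hyf. }
  set (q := fun j => fst (r j)).
  assert (Hq : closure (prod_opens opX) (orbit (@pow_act G X k actX) xb) q).
  { intros O HO Oq. destruct (HO q Oq) as [l' [V' [HV' K']]].
    destruct (Hr (fun f => forall i, In i l' -> V' i (fst (f i)))) with (P := fun _ : G => True)
      as [g [_ Hg]].
    - exists (fun j z => In j l' -> V' j (fst z)). split.
      + intros j _; split.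
        * apply op_cond; [apply prod2_T; auto| intros Hj; apply prod2_fst; auto; apply HV'; auto].
        * intro Hj; apply HV'; auto.
      + intros f Hf i Hi; apply Hf; auto.
    - intros _; exact Logic.I.
    - exists (@pow_act G X k actX g xb). split.
      + apply K'. intros i Hi. apply (Hg i Hi).
      + exists g; reflexivity. }
  assert (Hself : closure (prod_opens opX) (orbit (@pow_act G X k actX) xb) xb).
  { intros O _ Ox; exists xb; split; auto. exists (gone G).
    apply functional_extensionality; intro i; unfold pow_act; rewrite X1; auto. }
  assert (Hback := Mxb q Hq xb Hself).
  assert (Hcl : cluster (Nc opX l xb) (Ftriv G) (fun g => @pow_act G X k actX g q)).
  { intros U0 [V0 [HV0 HU0]] P HP.
    destruct (Hback (fun f => forall j, In j l -> V0 j (f j))) as [y [Hy [g ->]]].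
    - intros f Hf. exists l, V0. split; auto.
      intros i Hi; split; [apply HV0; auto| apply Hf; auto].
    - intros j Hj; apply HV0; auto.
    - exists g. split; auto. }
  destruct (ext (Nc opX l xb) (Ftriv G) opY (fun g => @pow_act G X k actX g q) (fun g => actY g z)
              CY (good_base_Nc opX l xb (proj1 TX) (proj1 (proj2 TX))) (good_base_Ftriv G) Hcl)
    as [w Hw].
  assert (Hxw : forall j, W (xb j, w)).
  { intro j; apply NNPP; intro Hnj.
    destruct (Wcl _ Hnj) as [A [B [HA [HB [Aj [Bw KB]]]]]]. simpl in Aj, Bw.
    destruct (Hw (fun pr => A (fst pr j) /\ B (snd pr))) with (P := fun _ : G => True)
      as [g [_ [Ag Bg]]].
    - exists (fun f => A (f j)), B. split; [|split;[auto|split;[auto|]]].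
      + exists (fun j' x => j' = j -> A x). split.
        * intros j' _; split.
          -- apply op_cond; [apply (proj1 TX)| auto].
          -- intro Ej; rewrite Ej; auto.
        * intros f Hf; apply Hf; auto.
      + intros a c Ha Hc; split; auto.
    - intros _; exact Logic.I.
    - simpl in Ag, Bg.
      apply (KB (actX g (q j), actY g z)); simpl; auto.
      replace (actX g (q j), actY g z) with (actX g (fst (r j)), actY g (snd (r j))).
      + apply (Winv g (r j)); apply Wr.
      + rewrite (Hz j (Hl j)); auto. }
  destruct (Hhs w) as [h [Hh Vh]].
  destruct (In_nth hs h (gone G) Hh) as [n [Hnk Hnth]].
  set (j0 := exist (fun m => m < k) n Hnk : fin k).
  apply (Hbox (actX h (xb j0), actY h w)); simpl; auto.
  - rewrite <- Hnth. exact (Bxb j0).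
  - apply (Winv h (xb j0, w)); apply Hxw.
Qed.
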